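(* Let $H$ be an SR-monoid. Then: (a) $1s\Rightarrow 0s$, $2s\Rightarrow 0s$, $3s\Rightarrow 0s$, $2s\Rightarrow 1s$, $2s\Rightarrow 3s$, $2s\Rightarrow 5s$, $3s\Rightarrow 6s$, $5s\Rightarrow 4s$, $4s\Rightarrow 4's$, $5s\Rightarrow 5's$; (b) $kr\Leftrightarrow ks$ for each $k\in\{0,1,2,3,4,4',5,5',6\}$.
   Context: A monoid means a commutative cancellative monoid (written multiplicatively); $H^{\ast}$ is its unit group, $\mathbb{N}=\{1,2,\dots\}$, $\mathbb{N}_0=\{0,1,2,\dots\}$. Elements are relatively prime ($a\perp b$) if all their common divisors are units. $\mathrm{Sqf}\,H$: elements not of the form $b^2c$ with $b\notin H^{\ast}$. $\mathrm{Gpr}\,H$: elements $r$ such that $r\mid b^n$ ($n\in\mathbb{N}$) implies $r\mid b$. $H$ is an SR-monoid if $\mathrm{Gpr}\,H=\mathrm{Sqf}\,H$. Let $S$ stand for $\mathrm{Sqf}\,H$ (suffix s) or $\mathrm{Gpr}\,H$ (suffix r). For every $a\in H$: (0) there are $n\in\mathbb{N}$, $s_1,\dots,s_n\in S$ with $a=s_1\cdots s_n$; (1) there are $n\in\mathbb{N}$, $s_1,\dots,s_n\in S$ with $s_i\perp s_j$ for $i\ne j$ and $a=s_1s_2^2\cdots s_n^n$; (2) there are $n\in\mathbb{N}$, $s_1,\dots,s_n\in S$ with $s_i\mid s_{i+1}$ ($i<n$) and $a=s_1\cdots s_n$; (3) there are $n\in\mathbb{N}_0$, $s_0,\dots,s_n\in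 S$ with $a=s_0s_1^2s_2^{2^2}\cdots s_n^{2^n}$; (4) there are $b\in H$, $c\in S$ with $b\perp c$, $a=bc$, and some $d\in S$ with $d^2\mid b$ and $b\mid d^n$ for some $n\in\mathbb{N}$; (4') there are $b\in H$, $c\in S$ with $b\perp c$, $a=bc$, and for every $d\in S$, $d\mid b$ implies $d^2\mid b$; (5) there are $b\in H$, $c\in S$ with $a=bc$ and $a\mid c^n$ for some $n\in\mathbb{N}$; (5') there are $b\in H$, $c\in S$ with $a=bc$ and for every $d\in S$, $d\mid a$ implies $d\mid c$; (6) there are $b\in H$, $c\in S$ with $a=b^2c$. Condition $ks$ (resp. $kr$) is $(k)$ with $S=\mathrm{Sqf}\,H$ (resp. $S=\mathrm{Gpr}\,H$). *)

(* Defs.v *)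
From Stdlib Require Import Arith.

Record CCMonoid := {
  carrier :> Type;
  mmul : carrier -> carrier -> carrier;
  mone : carrier;
  mmulA : forall x y z, mmul x (mmul y z) = mmul (mmul x y) z;
  mmulC : forall x y, mmul x y = mmul y x;
  mmul1 : forall x, mmul mone x = x;
  mcancel : forall x y z, mmul x y = mmul x z -> y = z
}.

Arguments mmul {c}.
Arguments mone {c}.

Section Defs.
Variable H : CCMonoid.

Local Notation "x * y" := (mmul x y).
Local Notation "1" := (@mone H).

Definition is_unit (x : H) : Prop := exists y, x * y = 1.

Definition mdvd (a b : H) : Prop := exists c, b = a * c.

Fixpoint mpow (x : H) (k : nat) : H :=
  match k with 0 => 1 | S k => mpow x k * x end.

Fixpoint mprod (s : nat -> H) (n : nat) : H :=
  match n with 0 => 1 | S n => mprod s n * s n end.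

Definition rel_prime (a b : H) : Prop :=
  forall d, mdvd d a -> mdvd d b -> is_unit d.

Definition Sqf (a : H) : Prop :=
  ~ exists b c, ~ is_unit b /\ a = mpow b 2 * c.

Definition Gpr (r : H) : Prop :=
  forall b n, 1 <= n -> mdvd r (mpow b n) -> mdvd r b.

Definition SR_monoid : Prop := forall a, Gpr a <-> Sqf a.

Definition cond0 (P : H -> Prop) : Prop :=
  forall a, exists n (s : nat -> H), 1 <= n /\ (forall i, i < n -> P (s i))
    /\ a = mprod s n.

(* s indexed 0..n-1 stands for s_1..s_n; exponent of s i is i+1 *)
Definition cond1 (P : H -> Prop) : Prop :=
  forall a, exists n (s : nat -> H), 1 <= n /\ (forall i, i < n -> P (s i))
    /\ (forall i j, i < n -> j < n -> i <> j -> rel_prime (s i) (s j))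
    /\ a = mprod (fun i => mpow (s i) (i + 1)) n.

Definition cond2 (P : H -> Prop) : Prop :=
  forall a, exists n (s : nat -> H), 1 <= n /\ (forall i, i < n -> P (s i))
    /\ (forall i, i + 1 < n -> mdvd (s i) (s (i + 1)))
    /\ a = mprod s n.

Definition cond3 (P : H -> Prop) : Prop :=
  forall a, exists n (s : nat -> H), (forall i, i <= n -> P (s i))
    /\ a = mprod (fun i => mpow (s i) (2 ^ i)) (n + 1).

Definition cond4 (P : H -> Prop) : Prop :=
  forall a, exists b c, P c /\ rel_prime b c /\ a = b * c /\
    exists d, P d /\ mdvd (mpow d 2) b /\ exists n, 1 <= n /\ mdvd b (mpow d n).

Definition cond4' (P : H -> Prop) : Prop :=
  forall a, exists b c, P c /\ rel_prime b c /\ a = b * c /\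
    forall d, P d -> mdvd d b -> mdvd (mpow d 2) b.

Definition cond5 (P : H -> Prop) : Prop :=
  forall a, exists b c, P c /\ a = b * c /\
    exists n, 1 <= n /\ mdvd a (mpow c n).

Definition cond5' (P : H -> Prop) : Prop :=
  forall a, exists b c, P c /\ a = b * c /\
    forall d, P d -> mdvd d a -> mdvd d c.

Definition cond6 (P : H -> Prop) : Prop :=
  forall a, exists b c, P c /\ a = mpow b 2 * c.

End Defs.

Inductive CondIdx := K0 | K1 | K2 | K3 | K4 | K4' | K5 | K5' | K6.

Definition cond (H : CCMonoid) (k : CondIdx) (P : H -> Prop) : Prop :=
  match k with
  | K0 => cond0 H P | K1 => cond1 H P | K2 => cond2 H P | K3 => cond3 H P
  | K4 => cond4 H P | K4' => cond4' H P | K5 => cond5 H P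
  | K5' => cond5' H P | K6 => cond6 H P
  end.

(* Main.v *)
Require Import Defs.
From Stdlib Require Import Arith Lia Classical ClassicalEpsilon FunctionalExtensionality PropExtensionality.

Local Notation "x ** y" := (mmul x y) (at level 40, left associativity).
Arguments mmulA {c}.
Arguments mmulC {c}.
Arguments mmul1 {c}.
Arguments mcancel {c}.
Arguments mpow {H}.
Arguments mprod {H}.
Arguments mdvd {H}.

Lemma mul1r {H : CCMonoid} (x : H) : x ** mone = x.
Proof. rewrite mmulC; apply mmul1. Qed.

Lemma mulACA {H : CCMonoid} (a b c d : H) : (a ** b) ** (c ** d) = (a ** c) ** (b ** d).
Proof.
  rewrite <- !mmulA. f_equal. rewrite !mmulA. f_equal. apply mmulC.
Qed.

Lemma mpow_1 {H : CCMonoid} (x : H) : mpow x 1 = x.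
Proof. simpl. apply mmul1. Qed.

Lemma mpow_one {H : CCMonoid} k : mpow (@mone H) k = mone.
Proof. induction k; simpl; [reflexivity|]. rewrite IHk. apply mmul1. Qed.

Lemma mpow_add {H : CCMonoid} (x : H) a b : mpow x (a + b) = mpow x a ** mpow x b.
Proof.
  induction b. - rewrite Nat.add_0_r. simpl. now rewrite mul1r.
  - rewrite Nat.add_succ_r. simpl. rewrite IHb. apply eq_sym, mmulA.
Qed.

Lemma mpow_mul {H : CCMonoid} (x : H) a b : mpow x (a * b) = mpow (mpow x a) b.
Proof.
  induction b. - rewrite Nat.mul_0_r. reflexivity.
  - rewrite Nat.mul_succ_r, mpow_add, IHb. reflexivity.
Qed.

Lemma mpow_mulD {H : CCMonoid} (x y : H) k : mpow (x ** y) k = mpow x k ** mpow y k.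
Proof.
  induction k; simpl. - now rewrite mmul1.
  - rewrite IHk. apply mulACA.
Qed.

Lemma mprod_ext {H : CCMonoid} (f g : nat -> H) n :
  (forall i, i < n -> f i = g i) -> mprod f n = mprod g n.
Proof.
  induction n; intros E; simpl; [reflexivity|].
  rewrite IHn by (intros; apply E; lia). rewrite E by lia. reflexivity.
Qed.

Lemma mprod_mul {H : CCMonoid} (f g : nat -> H) n :
  mprod (fun i => f i ** g i) n = mprod f n ** mprod g n.
Proof.
  induction n; simpl. - now rewrite mmul1.
  - rewrite IHn. apply mulACA.
Qed.

Lemma mprod_const {H : CCMonoid} (c : H) n : mprod (fun _ => c) n = mpow c n.
Proof. induction n; simpl; [reflexivity|]. now rewrite IHn. Qed.

Lemma mprod_pow {H : CCMonoid} (f : nat -> H) k n :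
  mprod (fun i => mpow (f i) k) n = mpow (mprod f n) k.
Proof.
  induction n; simpl. - now rewrite mpow_one.
  - rewrite IHn, mpow_mulD. reflexivity.
Qed.

Lemma mprod_shift {H : CCMonoid} (f : nat -> H) n :
  mprod f (S n) = f 0 ** mprod (fun i => f (S i)) n.
Proof.
  induction n. - simpl. rewrite mmul1, mul1r. reflexivity.
  - change (mprod f (S (S n))) with (mprod f (S n) ** f (S n)).
    rewrite IHn. simpl. apply eq_sym, mmulA.
Qed.

Lemma mprod_app {H : CCMonoid} (f g : nat -> H) n m :
  mprod (fun i => if i <? n then f i else g (i - n)) (n + m) = mprod f n ** mprod g m.
Proof.
  induction m.
  - rewrite Nat.add_0_r. simpl. rewrite mul1r. apply mprod_ext.
    intros i Hi. destruct (Nat.ltb_spec i n); [reflexivity|lia].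
  - rewrite Nat.add_succ_r. simpl. rewrite IHm.
    destruct (Nat.ltb_spec (n+m) n); [lia|].
    replace (n + m - n) with m by lia. apply eq_sym, mmulA.
Qed.

Lemma dvd_refl {H : CCMonoid} (x : H) : mdvd x x.
Proof. exists mone. now rewrite mul1r. Qed.

Lemma dvd_trans {H : CCMonoid} (x y z : H) : mdvd x y -> mdvd y z -> mdvd x z.
Proof. intros [a ->] [b ->]. exists (a ** b). apply eq_sym, mmulA. Qed.

Lemma dvd_mull {H : CCMonoid} (x y : H) : mdvd x (x ** y).
Proof. now exists y. Qed.

Lemma dvd_mulr {H : CCMonoid} (x y : H) : mdvd y (x ** y).
Proof. exists x. apply mmulC. Qed.

Lemma dvd_1 {H : CCMonoid} (x : H) : mdvd mone x.
Proof. exists x. now rewrite mmul1. Qed.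

Lemma dvd_mulD {H : CCMonoid} (a b c d : H) : mdvd a b -> mdvd c d -> mdvd (a ** c) (b ** d).
Proof. intros [x ->] [y ->]. exists (x ** y). apply mulACA. Qed.

Lemma dvd_pow_le {H : CCMonoid} (x : H) k m : k <= m -> mdvd (mpow x k) (mpow x m).
Proof. intros Hk. exists (mpow x (m - k)). rewrite <- mpow_add. f_equal. lia. Qed.

Lemma dvd_mprod {H : CCMonoid} (f g : nat -> H) n :
  (forall i, i < n -> mdvd (f i) (g i)) -> mdvd (mprod f n) (mprod g n).
Proof.
  induction n; intros E; simpl. - apply dvd_refl.
  - apply dvd_mulD; [apply IHn; intros; apply E; lia | apply E; lia].
Qed.

Lemma dvd_mprod_elem {H : CCMonoid} (f : nat -> H) n i : i < n -> mdvd (f i) (mprod f n).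
Proof.
  induction n; intros Hi; [lia|]. simpl.
  destruct (Nat.eq_dec i n) as [->|]. - apply dvd_mulr.
  - eapply dvd_trans; [apply IHn; lia | apply dvd_mull].
Qed.

Lemma dvd_mprod_two {H : CCMonoid} (f : nat -> H) n i j :
  i < n -> j < n -> i <> j -> mdvd (f i ** f j) (mprod f n).
Proof.
  induction n; intros Hi Hj Hij; [lia|]. simpl.
  destruct (Nat.eq_dec i n) as [->|]; destruct (Nat.eq_dec j n) as [->|].
  - lia.
  - rewrite mmulC. apply dvd_mulD; [apply dvd_mprod_elem; lia | apply dvd_refl].
  - apply dvd_mulD; [apply dvd_mprod_elem; lia | apply dvd_refl].
  - eapply dvd_trans; [apply IHn; lia | apply dvd_mull].
Qed.

Lemma Sqf_unit {H : CCMonoid} (y b : H) : Sqf H y -> mdvd (mpow b 2) y -> is_unit H b.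
Proof.
  intros S [c E]. apply NNPP. intros NU. apply S. exists b, c. auto.
Qed.

Lemma Sqf_dvd {H : CCMonoid} (x y : H) : Sqf H y -> mdvd x y -> Sqf H x.
Proof.
  intros S [k ->] [b [c [NU E]]]. apply S. exists b, (c ** k). split; [auto|].
  rewrite E. apply eq_sym, mmulA.
Qed.

Lemma Sqf_coprime {H : CCMonoid} (y u v : H) : Sqf H y -> mdvd (u ** v) y -> rel_prime H u v.
Proof.
  intros S D d Du Dv. apply (Sqf_unit y d S). eapply dvd_trans; [|exact D].
  simpl. rewrite mmul1. now apply dvd_mulD.
Qed.

Lemma Sqf_1 {H : CCMonoid} : Sqf H mone.
Proof.
  intros [b [c [NU E]]]. apply NU. exists (b ** c). simpl in E. rewrite mmul1 in E.
  rewrite E. rewrite <- mmulA. reflexivity.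
Qed.

Lemma chain_rep {H : CCMonoid} m : forall (s : nat -> H),
  (forall i, i + 1 < S m -> mdvd (s i) (s (i + 1))) ->
  exists t, mprod t (S m) = s m /\
    mprod s (S m) = mprod (fun i => mpow (t i) (i + 1)) (S m).
Proof.
  induction m; intros s Ch.
  - exists s. simpl. rewrite !mmul1. auto.
  - assert (D0 : forall i, i <= S m -> mdvd (s 0) (s i)).
    { induction i; intros Hi. apply dvd_refl.
      eapply dvd_trans; [apply IHi; lia|]. replace (S i) with (i + 1) by lia. apply Ch. lia. }
    set (s' := fun i => epsilon (inhabits (@mone H)) (fun c => s (S i) = s 0 ** c)).
    assert (Es : forall i, i <= m -> s (S i) = s 0 ** s' i).
    { intros i Hi. unfold s'. apply (epsilon_spec (inhabits (@mone H)) (fun c => s (S i) = s 0 ** c)).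
      destruct (D0 (S i) ltac:(lia)) as [c Ec]. now exists c. }
    destruct (IHm s') as [t' [E1 E2]].
    { intros i Hi. destruct (Ch (S i) ltac:(lia)) as [k Ek].
      replace (S i + 1) with (S (i + 1)) in Ek by lia.
      rewrite (Es i) in Ek by lia. rewrite (Es (i+1)) in Ek by lia.
      exists k. apply (mcancel (s 0)). rewrite Ek. apply eq_sym, mmulA. }
    exists (fun i => if i <? S m then t' i else s 0). split.
    + change (mprod (fun i => if i <? S m then t' i else s 0) (S (S m))) with
        (mprod (fun i => if i <? S m then t' i else s 0) (S m) **
         (if S m <? S m then t' (S m) else s 0)).
      rewrite Nat.ltb_irrefl.
      rewrite (mprod_ext _ t') by (intros i Hi; destruct (Nat.ltb_spec i (S m)); [reflexivity|lia]).
      rewrite E1, Es by lia. apply mmulC.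
    + rewrite mprod_shift.
      rewrite (mprod_ext (fun i => s (S i)) (fun i => s 0 ** s' i)) by (intros; apply Es; lia).
      rewrite mprod_mul, mprod_const, E2.
      change (mprod (fun i => mpow (if i <? S m then t' i else s 0) (i + 1)) (S (S m))) with
        (mprod (fun i => mpow (if i <? S m then t' i else s 0) (i + 1)) (S m) **
         mpow (if S m <? S m then t' (S m) else s 0) (S m + 1)).
      rewrite Nat.ltb_irrefl.
      rewrite (mprod_ext (fun i => mpow (if i <? S m then t' i else s 0) (i + 1)) (fun i => mpow (t' i) (i + 1)))
        by (intros i Hi; destruct (Nat.ltb_spec i (S m)); [reflexivity|lia]).
      replace (S m + 1) with (S (S m)) by lia.
      change (mpow (s 0) (S (S m))) with (mpow (s 0) (S m) ** s 0).
      set (X := mprod (fun i => mpow (t' i) (i + 1)) (S m)).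
      set (P := mpow (s 0) (S m)).
      rewrite (mmulC P X), mmulA, (mmulC (s 0) X), <- mmulA, (mmulC (s 0) P). reflexivity.
Qed.

Lemma core2 {H : CCMonoid} : cond2 H (Sqf H) -> forall a : H,
  exists m t, Sqf H (mprod t (S m)) /\ a = mprod (fun i => mpow (t i) (i + 1)) (S m).
Proof.
  intros C a. destruct (C a) as [n [s [Hn [Hs [Ch Ea]]]]].
  destruct n as [|m]; [lia|].
  destruct (chain_rep m s Ch) as [t [E1 E2]].
  exists m, t. split. rewrite E1; apply Hs; lia. congruence.
Qed.

Lemma exp_rep {H : CCMonoid} (t : nat -> H) n E : forall e : nat -> nat,
  (forall i, i < n -> e i <= E) ->
  exists N s, (forall i, i <= N -> mdvd (s i) (mprod t n)) /\
    mprod (fun i => mpow (t i) (e i)) n = mprod (fun i => mpow (s i) (2 ^ i)) (N + 1).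
Proof.
  induction E; intros e He.
  - exists 0, (fun _ => mone). split. intros; apply dvd_1.
    rewrite (mprod_ext _ (fun _ => mone)).
    + rewrite mprod_const, mpow_one. simpl. now rewrite !mmul1.
    + intros i Hi. specialize (He i Hi). replace (e i) with 0 by lia. reflexivity.
  - destruct (IHE (fun i => e i / 2)) as [N [s [Hs Es]]].
    { intros i Hi. specialize (He i Hi).
      pose proof (Nat.div_mod_eq (e i) 2). pose proof (Nat.mod_upper_bound (e i) 2). lia. }
    set (X := mprod (fun i => mpow (t i) (e i mod 2)) n).
    exists (N + 1), (fun i => match i with 0 => X | S k => s k end). split.
    + intros [|i] Hi.
      * apply dvd_mprod. intros i _. rewrite <- (mpow_1 (t i)) at 2.
        apply dvd_pow_le. pose proof (Nat.mod_upper_bound (e i) 2). lia.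
      * apply Hs. lia.
    + rewrite (mprod_ext _ (fun i => mpow (t i) (e i mod 2) ** mpow (mpow (t i) (e i / 2)) 2)).
      2:{ intros i _. rewrite <- mpow_mul, <- mpow_add. f_equal.
          pose proof (Nat.div_mod_eq (e i) 2). lia. }
      rewrite mprod_mul. fold X. rewrite mprod_pow, Es, <- mprod_pow.
      replace (N + 1 + 1) with (S (N + 1)) by lia.
      rewrite mprod_shift. simpl (2 ^ 0). rewrite mpow_1. f_equal.
      apply mprod_ext. intros i _. rewrite <- mpow_mul. f_equal. simpl. lia.
Qed.

Definition PR {H : CCMonoid} (a : H) :=
  exists n s, (forall i, i < n -> Sqf H (s i)) /\ a = mprod s n.

Lemma PR_cond0 {H : CCMonoid} : (forall a : H, PR a) -> cond0 H (Sqf H).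
Proof.
  intros P a. destruct (P a) as [n [s [Hs Ea]]]. destruct n.
  - exists 1, (fun _ => mone). split; [lia|]. split. intros; apply Sqf_1.
    simpl in *. now rewrite mmul1.
  - exists (S n), s. split; [lia|]. auto.
Qed.

Lemma PR_mul {H : CCMonoid} (x y : H) : PR x -> PR y -> PR (x ** y).
Proof.
  intros [n [s [Hs ->]]] [m [s' [Hs' ->]]].
  exists (n + m), (fun i => if i <? n then s i else s' (i - n)). split.
  - intros i Hi. destruct (Nat.ltb_spec i n). auto. apply Hs'. lia.
  - now rewrite mprod_app.
Qed.

Lemma PR_1 {H : CCMonoid} : PR (@mone H).
Proof. exists 0, (fun _ => mone). split. intros; lia. reflexivity. Qed.

Lemma PR_sqf {H : CCMonoid} (x : H) : Sqf H x -> PR x.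
Proof. intros S. exists 1, (fun _ => x). split. intros; auto. simpl. now rewrite mmul1. Qed.

Lemma PR_pow {H : CCMonoid} (x : H) k : PR x -> PR (mpow x k).
Proof. intros P. induction k; simpl. apply PR_1. now apply PR_mul. Qed.

Lemma PR_mprod {H : CCMonoid} (f : nat -> H) n : (forall i, i < n -> PR (f i)) -> PR (mprod f n).
Proof.
  induction n; intros P; simpl. apply PR_1. apply PR_mul. apply IHn; intros; apply P; lia. apply P; lia.
Qed.

Lemma cond_ext (H : CCMonoid) k (P Q : H -> Prop) : (forall a, P a <-> Q a) -> cond H k P -> cond H k Q.
Proof.
  intros E. assert (P = Q) as ->. { apply functional_extensionality; intros; apply propositional_extensionality; auto. }
  auto.
Qed.

Theorem proposition4p2 (H : CCMonoid) :
  SR_monoid H ->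
  (* (a) *)
  ((cond H K1 (Sqf H) -> cond H K0 (Sqf H)) /\
   (cond H K2 (Sqf H) -> cond H K0 (Sqf H)) /\
   (cond H K3 (Sqf H) -> cond H K0 (Sqf H)) /\
   (cond H K2 (Sqf H) -> cond H K1 (Sqf H)) /\
   (cond H K2 (Sqf H) -> cond H K3 (Sqf H)) /\
   (cond H K2 (Sqf H) -> cond H K5 (Sqf H)) /\
   (cond H K3 (Sqf H) -> cond H K6 (Sqf H)) /\
   (cond H K5 (Sqf H) -> cond H K4 (Sqf H)) /\
   (cond H K4 (Sqf H) -> cond H K4' (Sqf H)) /\
   (cond H K5 (Sqf H) -> cond H K5' (Sqf H)))
  /\
  (* (b) *)
  (forall k : CondIdx, cond H k (Gpr H) <-> cond H k (Sqf H)).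
Proof.
  intros SR. assert (G : forall x, Sqf H x -> Gpr H x) by (intros; apply SR; auto).
  split; [|intros k; split; apply cond_ext; intros; [apply SR | symmetry; apply SR]].
  simpl. split; [|split; [|split; [|split; [|split; [|split; [|split; [|split; [|split]]]]]]]].
  - (* 1 -> 0 *)
    intros C. apply PR_cond0. intros a. destruct (C a) as [n [s [_ [Hs [_ ->]]]]].
    apply PR_mprod. intros i Hi. apply PR_pow, PR_sqf, Hs, Hi.
  - (* 2 -> 0 *)
    intros C a. destruct (C a) as [n [s [Hn [Hs [_ E]]]]]. exists n, s. auto.
  - (* 3 -> 0 *)
    intros C. apply PR_cond0. intros a. destruct (C a) as [n [s [Hs ->]]].
    apply PR_mprod. intros i Hi. apply PR_pow, PR_sqf, Hs. lia.
  - (* 2 -> 1 *)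
    intros C a. destruct (core2 C a) as [m [t [St Ea]]].
    exists (S m), t. split; [lia|]. split; [|split; [|exact Ea]].
    + intros i Hi. eapply Sqf_dvd; [exact St|]. now apply dvd_mprod_elem.
    + intros i j Hi Hj Hij. eapply Sqf_coprime; [exact St|]. now apply dvd_mprod_two.
  - (* 2 -> 3 *)
    intros C a. destruct (core2 C a) as [m [t [St Ea]]].
    destruct (exp_rep t (S m) (S m) (fun i => i + 1)) as [N [s [Hs Es]]].
    { intros; lia. }
    exists N, s. split. intros i Hi. eapply Sqf_dvd; [exact St|]. auto.
    congruence.
  - (* 2 -> 5 *)
    intros C a. destruct (core2 C a) as [m [t [St Ea]]].
    exists (mprod (fun i => mpow (t i) i) (S m)), (mprod t (S m)).
    split; [exact St|]. split.
    + rewrite Ea, <- mprod_mul. apply mprod_ext. intros i _.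
      rewrite Nat.add_1_r. reflexivity.
    + exists (S m). split; [lia|]. rewrite Ea, <- mprod_pow. apply dvd_mprod.
      intros i Hi. apply dvd_pow_le. lia.
  - (* 3 -> 6 *)
    intros C a. destruct (C a) as [n [s [Hs Ea]]].
    exists (mprod (fun i => mpow (s (S i)) (2 ^ i)) n), (s 0). split. apply Hs; lia.
    rewrite Ea. replace (n + 1) with (S n) by lia. rewrite mprod_shift.
    simpl (2 ^ 0). rewrite mpow_1, mmulC. f_equal.
    rewrite <- mprod_pow. apply mprod_ext. intros i _. rewrite <- mpow_mul. f_equal. simpl. lia.
  - (* 5 -> 4 *)
    intros C a. destruct (C a) as [b [c [Sc [Ea [m [Hm Dm]]]]]].
    destruct (C b) as [b1 [c1 [Sc1 [Eb [k [Hk Dk]]]]]].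
    assert (D1 : mdvd c1 c).
    { apply (G c1 Sc1 c m Hm). eapply dvd_trans; [|exact Dm].
      eapply dvd_trans; [|rewrite Ea; apply dvd_mull]. rewrite Eb. apply dvd_mulr. }
    destruct D1 as [e Ec].
    assert (Bk : mdvd (b ** c1) (mpow c1 (S k))) by (apply dvd_mulD; [exact Dk|apply dvd_refl]).
    exists (b ** c1), e. split; [|split; [|split]].
    + eapply Sqf_dvd; [exact Sc|]. rewrite Ec. apply dvd_mulr.
    + intros x Dx1 Dx2.
      assert (Sx : Sqf H x) by (eapply Sqf_dvd; [exact Sc|]; eapply dvd_trans; [exact Dx2|]; rewrite Ec; apply dvd_mulr).
      assert (Dx : mdvd x c1) by (apply (G x Sx c1 (S k) ltac:(lia)); exact (dvd_trans _ _ _ Dx1 Bk)).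
      apply (Sqf_coprime c c1 e Sc ltac:(rewrite Ec; apply dvd_refl)); auto.
    + rewrite Ea, Ec. apply mmulA.
    + exists c1. split; [exact Sc1|]. split.
      * simpl. rewrite mmul1. apply dvd_mulD; [|apply dvd_refl].
        rewrite Eb. apply dvd_mulr.
      * exists (S k). split; [lia|exact Bk].
  - (* 4 -> 4' *)
    intros C a. destruct (C a) as [b [c [Sc [Rbc [Ea [d [Sd [Dd2 [n [Hn Dn]]]]]]]]]].
    exists b, c. split; [exact Sc|]. split; [exact Rbc|]. split; [exact Ea|].
    intros x Sx Dx. destruct (G x Sx d n Hn (dvd_trans _ _ _ Dx Dn)) as [y Ey].
    eapply dvd_trans; [|exact Dd2]. rewrite Ey, mpow_mulD. apply dvd_mull.
  - (* 5 -> 5' *)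
    intros C a. destruct (C a) as [b [c [Sc [Ea [n [Hn Dn]]]]]].
    exists b, c. split; [exact Sc|]. split; [exact Ea|].
    intros x Sx Dx. apply (G x Sx c n Hn). eapply dvd_trans; eauto.
Qed.
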